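(* Let $\mathcal{C}$ be one of the following categories: the category of non-empty sets; the category of pointed sets; the category of groups; the category of modules over some ring. Let $\mathcal{D}$ be one of the following categories: finite sets; finite groups; countable groups; finitely generated modules over a ring $R$. Then any functor from $\mathcal{C}$ to $\mathcal{D}$ is isomorphic to a constant functor. *)

(* Defs.v *)
From HB Require Import structures.
From mathcomp Require Import all_boot all_order all_fingroup all_algebra.
From Stdlib Require Import ProofIrrelevance FunctionalExtensionality.
Set Implicit Arguments. Unset Strict Implicit. Unset Printing Implicit Defensive.
Import GRing.Theory.
Local Open Scope ring_scope.

Record Category := {
  Obj :> Type;
  Hom : Obj -> Obj -> Type;
  idm : forall a, Hom a a;
  comp : forall a b c, Hom b c -> Hom a b -> Hom a c;
  comp_id_l : forall a b (f : Hom a b), comp (idm b) f = f;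
  comp_id_r : forall a b (f : Hom a b), comp f (idm a) = f;
  comp_assoc : forall a b c d (h : Hom c d) (g : Hom b c) (f : Hom a b),
      comp h (comp g f) = comp (comp h g) f
}.
Arguments Hom {_} _ _.
Arguments idm {_} _.
Arguments comp {_ _ _ _} _ _.

Record Functor (C D : Category) := {
  fobj :> C -> D;
  fmap : forall a b : C, Hom a b -> Hom (fobj a) (fobj b);
  fmap_id : forall a : C, fmap (idm a) = idm (fobj a);
  fmap_comp : forall (a b c : C) (g : Hom b c) (f : Hom a b),
      fmap (comp g f) = comp (fmap g) (fmap f)
}.
Arguments fmap {_ _} _ {_ _} _.

Definition ConstFunctor (C D : Category) (X : D) : Functor C D :=
  @Build_Functor C D (fun _ => X) (fun _ _ _ => idm X)
    (fun _ => erefl) (fun _ _ _ _ _ => esym (comp_id_l (idm X))).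

Definition NatIso (C D : Category) (F G : Functor C D) : Prop :=
  exists (eta : forall a : C, Hom (F a) (G a))
         (inv : forall a : C, Hom (G a) (F a)),
    (forall a, comp (inv a) (eta a) = idm (F a)) /\
    (forall a, comp (eta a) (inv a) = idm (G a)) /\
    (forall (a b : C) (f : Hom a b), comp (eta b) (fmap F f) = comp (fmap G f) (eta a)).

Definition only_constant_functors (C D : Category) : Prop :=
  forall F : Functor C D, exists X : D, NatIso F (ConstFunctor C X).

Lemma sig_eq_val (A : Type) (P : A -> Prop) (x y : {a | P a}) :
  proj1_sig x = proj1_sig y -> x = y.
Proof.
case: x => a pa; case: y => b pb /= eab; subst b.
by rewrite (proof_irrelevance _ pa pb).
Qed.

Record Grp := {
  gcar :> Type;
  gmul : gcar -> gcar -> gcar;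
  gone : gcar;
  ginv : gcar -> gcar;
  gmulA : forall x y z, gmul x (gmul y z) = gmul (gmul x y) z;
  gmul1 : forall x, gmul gone x = x;
  gmulV : forall x, gmul (ginv x) x = gone
}.

Definition grp_hom (G H : Grp) : Type :=
  {f : G -> H | forall x y, f (gmul x y) = gmul (f x) (f y)}.

Definition countable_type (T : Type) : Prop :=
  exists f : T -> nat, injective f.

Definition NonEmptySets : Category.
unshelve refine (@Build_Category {T : Type | inhabited T}
          (fun A B => proj1_sig A -> proj1_sig B)
          (fun A => id) (fun A B C g f => g \o f) _ _ _); by [].
Defined.

Definition PointedSets : Category.
unshelve refine (@Build_Category {T : Type & T}
          (fun A B => {f : projT1 A -> projT1 B | f (projT2 A) = projT2 B})
          (fun A => exist _ id erefl)
          (fun A B C g f => exist _ (proj1_sig g \o proj1_sig f) _) _ _ _).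
- by rewrite /= (proj2_sig f) (proj2_sig g).
- by move=> a b f; apply: sig_eq_val.
- by move=> a b f; apply: sig_eq_val.
- by move=> a b c d h g f; apply: sig_eq_val.
Defined.

Definition Groups : Category.
unshelve refine (@Build_Category Grp grp_hom
          (fun G => exist _ id _)
          (fun A B C g f => exist _ (proj1_sig g \o proj1_sig f) _) _ _ _).
- by [].
- by move=> x y /=; rewrite (proj2_sig f) (proj2_sig g).
- by move=> a b f; apply: sig_eq_val.
- by move=> a b f; apply: sig_eq_val.
- by move=> a b c d h g f; apply: sig_eq_val.
Defined.

Definition Modules (S : pzRingType) : Category.
unshelve refine (@Build_Category (lmodType S)
          (fun M N => {f : M -> N | linear f})
          (fun M => exist _ id _)
          (fun A B C g f => exist _ (proj1_sig g \o proj1_sig f) _) _ _ _).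
- by [].
- by move=> a u v /=; rewrite (proj2_sig f) (proj2_sig g).
- by move=> a b f; apply: sig_eq_val.
- by move=> a b f; apply: sig_eq_val.
- by move=> a b c d h g f; apply: sig_eq_val.
Defined.

Definition FinSets : Category.
unshelve refine (@Build_Category finType (fun A B => A -> B)
          (fun A => id) (fun A B C g f => g \o f) _ _ _); by [].
Defined.

(* finite groups: a finGroupType is a finite group (the whole type) *)
Definition FinGroups : Category.
unshelve refine (@Build_Category finGroupType
          (fun G H => {f : G -> H | {morph f : x y / (x * y)%g}})
          (fun G => exist _ id _)
          (fun A B C g f => exist _ (proj1_sig g \o proj1_sig f) _) _ _ _).
- by [].
- by move=> x y /=; rewrite (proj2_sig f) (proj2_sig g).
- by move=> a b f; apply: sig_eq_val.
- by move=> a b f; apply: sig_eq_val.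
- by move=> a b c d h g f; apply: sig_eq_val.
Defined.

Definition CountableGroups : Category.
unshelve refine (@Build_Category {G : Grp | countable_type G}
          (fun G H => grp_hom (proj1_sig G) (proj1_sig H))
          (fun G => exist _ id _)
          (fun A B C g f => exist _ (proj1_sig g \o proj1_sig f) _) _ _ _).
- by [].
- by move=> x y /=; rewrite (proj2_sig f) (proj2_sig g).
- by move=> a b f; apply: sig_eq_val.
- by move=> a b f; apply: sig_eq_val.
- by move=> a b c d h g f; apply: sig_eq_val.
Defined.

Definition fin_generated (R : pzRingType) (M : lmodType R) : Prop :=
  exists (n : nat) (v : 'I_n -> M),
    forall m : M, exists c : 'I_n -> R, m = \sum_(i < n) c i *: v i.

Definition FGModules (R : pzRingType) : Category.
unshelve refine (@Build_Category {M : lmodType R | fin_generated M}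
          (fun M N => {f : proj1_sig M -> proj1_sig N | linear f})
          (fun M => exist _ id _)
          (fun A B C g f => exist _ (proj1_sig g \o proj1_sig f) _) _ _ _).
- by [].
- by move=> a u v /=; rewrite (proj2_sig f) (proj2_sig g).
- by move=> a b f; apply: sig_eq_val.
- by move=> a b f; apply: sig_eq_val.
- by move=> a b c d h g f; apply: sig_eq_val.
Defined.

Inductive source_kind :=
  | SrcNonEmptySets | SrcPointedSets | SrcGroups | SrcModules of pzRingType.

Definition source_cat (k : source_kind) : Category :=
  match k with
  | SrcNonEmptySets => NonEmptySets
  | SrcPointedSets => PointedSets
  | SrcGroups => Groups
  | SrcModules Rg => Modules Rg
  end.

Inductive target_kind :=
  | TgtFinSets | TgtFinGroups | TgtCountableGroups | TgtFGModules of pzRingType.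

Definition target_cat (k : target_kind) : Category :=
  match k with
  | TgtFinSets => FinSets
  | TgtFinGroups => FinGroups
  | TgtCountableGroups => CountableGroups
  | TgtFGModules Rg => FGModules Rg
  end.

(* Main.v *)
Require Import Defs.
From HB Require Import structures.
From mathcomp Require Import all_boot all_order all_fingroup all_algebra.
From Stdlib Require Import ProofIrrelevance FunctionalExtensionality Classical ClassicalEpsilon.
From mathcomp Require Import functions.
Import Defs.
Set Implicit Arguments. Unset Strict Implicit. Unset Printing Implicit Defensive.

Lemma cantor (A : Type) (g : (A -> bool) -> A) : ~ injective g.
Proof.
move=> ig.
pose P := fun a => exists S, g S = a /\ S a = true.
pose b := fun a => is_left (excluded_middle_informative (P a)).
have bP : forall a, b a = true <-> P a.
  move=> a; rewrite /b; case: excluded_middle_informative => //= H; split => //.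
pose D := fun a => ~~ b a.
case E: (b (g D)).
  have [S [E1 E2]] := (proj1 (bP _)) E.
  by move: E2; rewrite (ig _ _ E1) /D E.
have : P (g D) by exists D; rewrite /D E.
by move/bP; rewrite E.
Qed.

Definition src_good (C : Category) (A : Type) : Prop :=
  exists (u : C) (t : forall X : C, Hom X u) (s : forall X : C, Hom u X),
   (forall X, comp (t X) (s X) = idm u) /\
   (forall X Y (f : Hom X Y), comp (t Y) f = t X) /\
   (forall X : C, exists (Y : C) (proj : A -> Hom Y X) (incl : A -> Hom X Y)
        (e : (A -> bool) -> Hom Y Y),
     forall S i, comp (proj i) (comp (e S) (incl i)) =
                 if S i then idm X else comp (s X) (t X)).

Definition tgt_good (D : Category) (A : Type) : Prop :=
  forall d : D, exists h : Hom d d -> A, injective h.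

Lemma main (C D : Category) (A : Type) :
  src_good C A -> tgt_good D A -> only_constant_functors C D.
Proof.
move=> [u [t [s [ts [tn big]]]]] sm F.
have key : forall X, fmap F (comp (s X) (t X)) = idm (F X).
  move=> X; have [Y [proj [incl [e He]]]] := big X.
  have [h ih] := sm (F Y).
  have : ~ injective (fun S => h (fmap F (e S))) by apply: cantor.
  rewrite /injective => H0.
  have [S H1] := not_all_ex_not _ _ H0.
  have [T H2] := not_all_ex_not _ _ H1.
  have [/ih eST nST] := imply_to_and _ _ H2.
  have [i Hi] : exists i, S i <> T i.
    apply: NNPP => H; apply: nST; apply: functional_extensionality => i.
    by apply: NNPP => H'; apply: H; exists i.
  have HS := He S i; have HT := He T i.
  have := f_equal (fun g => fmap F (proj i) ) (erefl tt).
  move=> _.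
  have E1 : fmap F (comp (proj i) (comp (e S) (incl i))) =
            fmap F (comp (proj i) (comp (e T) (incl i))).
    by rewrite !fmap_comp eST.
  move: E1; rewrite HS HT.
  case: (S i) (T i) Hi => [] [] // _; rewrite fmap_id => ->; done.
exists (F u).
exists (fun a => fmap F (t a)), (fun a => fmap F (s a)).
split; [|split].
- by move=> a; rewrite /= -fmap_comp key.
- by move=> a; rewrite /= -fmap_comp ts fmap_id.
- move=> a b f /=; rewrite comp_id_l -fmap_comp tn //.
Qed.

Definition mkNE (T : Type) (x : T) : NonEmptySets :=
  @exist Type (fun T => inhabited T) T (inhabits x).

Definition pt (X : NonEmptySets) : proj1_sig X :=
  epsilon (proj2_sig X) (fun _ => True).

Lemma src_sets (A : Type) : src_good NonEmptySets A.
Proof.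
pose u := mkNE tt.
exists u.
exists (fun X => (fun _ => tt) : Hom X u).
exists (fun X => (fun _ => pt X) : Hom u X).
split; [|split].
- by move=> X; apply: functional_extensionality => -[].
- by move=> X Y f; apply: functional_extensionality.
move=> X.
pose Y := mkNE (fun _ : A => pt X).
exists Y.
exists (fun i => (fun f => f i) : Hom Y X).
exists (fun i => (fun x _ => x) : Hom X Y).
exists (fun S => (fun f j => if S j then f j else pt X) : Hom Y Y).
move=> S i; case E: (S i); apply: functional_extensionality => x /=; by rewrite E.
Qed.

Definition mkP (T : Type) (x : T) : PointedSets := @existT Type (fun T => T) T x.

Lemma src_pointed (A : Type) : src_good PointedSets A.
Proof.
pose u := mkP tt.
exists u.
exists (fun X => exist _ (fun _ => tt) erefl : Hom X u).
exists (fun X => exist _ (fun _ => projT2 X) erefl : Hom u X).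
split; [|split].
- by move=> X; apply: sig_eq_val; apply: functional_extensionality => -[].
- by move=> X Y f; apply: sig_eq_val; apply: functional_extensionality.
move=> X.
pose Y := mkP (fun _ : A => projT2 X).
exists Y.
exists (fun i => exist _ (fun f : A -> projT1 X => f i) erefl : Hom Y X).
exists (fun i => exist _ (fun x (_ : A) => x) erefl : Hom X Y).
unshelve eexists (fun S => exist _ (fun (f : A -> projT1 X) j => if S j then f j else projT2 X) _ : Hom Y Y).
  by apply: functional_extensionality => j /=; case: (S j).
move=> S i; case E: (S i); apply: sig_eq_val; apply: functional_extensionality => x /=; by rewrite E.
Qed.

Definition trivGrp : Grp.
refine (@Build_Grp unit (fun _ _ => tt) tt (fun _ => tt) _ _ _); by case.
Defined.

Definition powGrp (A : Type) (G : Grp) : Grp.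
refine (@Build_Grp (A -> G) (fun f g j => gmul (f j) (g j)) (fun _ => gone G)
   (fun f j => ginv (f j)) _ _ _).
- by move=> x y z; apply: functional_extensionality => j; rewrite gmulA.
- by move=> x; apply: functional_extensionality => j; rewrite gmul1.
- by move=> x; apply: functional_extensionality => j; rewrite gmulV.
Defined.

Lemma src_groups (A : Type) : src_good Groups A.
Proof.
pose u := trivGrp : Groups.
exists u.
exists (fun X => exist _ (fun _ => tt) (fun _ _ => erefl) : Hom X u).
unshelve eexists (fun X => exist _ (fun _ => gone X) _ : Hom u X).
  by move=> x y; rewrite gmul1.
split; [|split].
- by move=> X; apply: sig_eq_val; apply: functional_extensionality => -[].
- by move=> X Y f; apply: sig_eq_val; apply: functional_extensionality.
move=> X.
pose Y := powGrp A X : Groups.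
exists Y.
exists (fun i => exist (fun h : Y -> X => forall x y, h (gmul x y) = gmul (h x) (h y)) (fun f : Y => f i) (fun _ _ => erefl) : Hom Y X).
exists (fun i => exist (fun h : X -> Y => forall x y, h (gmul x y) = gmul (h x) (h y)) (fun x (_ : A) => x) (fun _ _ => erefl) : Hom X Y).
unshelve eexists (fun S => exist _ (fun (f : A -> X) j => if S j then f j else gone X) _ : Hom Y Y).
  by move=> x y; apply: functional_extensionality => j /=; case: (S j); rewrite ?gmul1.
move=> S i; case E: (S i); apply: sig_eq_val; apply: functional_extensionality => x /=; by rewrite E.
Qed.

Section Mods.
Variable R : pzRingType.
Import GRing.Theory.
Local Open Scope ring_scope.

Lemma src_modules (A : Type) : src_good (Modules R) A.
Proof.
pose u := ('rV[R]_0 : lmodType R) : Modules R.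
exists u.
unshelve eexists (fun X => exist _ (fun _ => 0) _ : Hom X u).
  by move=> a x y; rewrite scaler0 addr0.
unshelve eexists (fun X => exist _ (fun _ => 0) _ : Hom u X).
  by move=> a x y; rewrite /= scaler0 addr0.
split; [|split].
- move=> X; apply: sig_eq_val; apply: functional_extensionality => x /=.
  by rewrite [x]thinmx0.
- by move=> X Y f; apply: sig_eq_val; apply: functional_extensionality.
move=> X.
pose Y := ((A -> (X : lmodType R)) : lmodType R) : Modules R.
exists Y.
unshelve eexists (fun i => exist _ (fun f : A -> X => f i) _ : Hom Y X).
  by move=> a x y.
unshelve eexists (fun i => exist _ (fun x (_ : A) => x) _ : Hom X Y).
  by move=> a x y.
unshelve eexists (fun S => exist _ (fun (f : A -> X) j => if S j then f j else 0) _ : Hom Y Y).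
  move=> a x y; apply: functional_extensionality => j /=.
  by rewrite !fctE; case: (S j); rewrite ?scaler0 ?addr0.
move=> S i; case E: (S i); apply: sig_eq_val; apply: functional_extensionality => x /=; by rewrite E.
Qed.
End Mods.

Definition cnt_code (T : countType) (f : T -> T) : nat -> nat :=
  fun n => if unpickle n is Some x then pickle (f x) else 0%N.

Lemma cnt_code_inj (T : countType) : injective (@cnt_code T).
Proof.
move=> f g E; apply: functional_extensionality => x.
have := f_equal (fun h => h (pickle x)) E; rewrite /cnt_code pickleK.
exact: (pcan_inj (@pickleK T)).
Qed.

Lemma tgt_finsets : tgt_good FinSets (nat -> nat).
Proof. by move=> d; exists (@cnt_code d); exact: cnt_code_inj. Qed.

Lemma tgt_fingroups : tgt_good FinGroups (nat -> nat).
Proof.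
move=> d; exists (fun f => @cnt_code d (proj1_sig f)).
by move=> f g /cnt_code_inj E; apply: sig_eq_val.
Qed.

Lemma tgt_cntgroups : tgt_good CountableGroups (nat -> nat).
Proof.
move=> d; have [c ic] := proj2_sig d.
pose finv := fun n => epsilon (inhabits (gone (proj1_sig d))) (fun x => c x = n).
have finvK : forall x, finv (c x) = x.
  by move=> x; apply: ic; rewrite /finv; apply: (epsilon_spec (inhabits (gone (proj1_sig d))) (fun y => c y = c x)); exists x.
exists (fun f => fun n => c (proj1_sig f (finv n))).
move=> f g E; apply: sig_eq_val; apply: functional_extensionality => x.
by apply: ic; have := f_equal (fun h => h (c x)) E; rewrite /= finvK.
Qed.

Section FG.
Variable R : pzRingType.
Import GRing.Theory.
Local Open Scope ring_scope.

Lemma lin_sum (M N : lmodType R) (f : M -> N) (lf : linear f) n (c : 'I_n -> R) (v : 'I_n -> M) :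
  f (\sum_(i < n) c i *: v i) = \sum_(i < n) c i *: f (v i).
Proof.
have f0 : f 0 = 0.
  by have := lf (-1) 0 0; rewrite scaler0 addr0 scaleN1r addNr.
have fZ : forall a x, f (a *: x) = a *: f x.
  by move=> a x; have := lf a x 0; rewrite !addr0 f0 addr0.
have fD : forall x y, f (x + y) = f x + f y.
  by move=> x y; have := lf 1 x y; rewrite !scale1r.
rewrite (big_morph f fD f0); apply: eq_bigr => i _; exact: fZ.
Qed.

Lemma tgt_fgmods : tgt_good (FGModules R) (nat -> nat -> R).
Proof.
move=> d; have [n [v Hv]] := proj2_sig d.
pose coef := fun m : proj1_sig d => epsilon (inhabits (fun _ : 'I_n => (0 : R)))
   (fun c => m = \sum_(i < n) c i *: v i).
have coefP : forall m, m = \sum_(i < n) coef m i *: v i.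
  move=> m; rewrite /coef; apply: (epsilon_spec (inhabits (fun _ : 'I_n => (0 : R)))
     (fun c => m = \sum_(i < n) c i *: v i)); exact: Hv.
exists (fun f => fun j k => match (insub j : option 'I_n), (insub k : option 'I_n) with
   | Some jj, Some kk => coef (proj1_sig f (v jj)) kk | _, _ => 0 end).
move=> f g E.
have Ev : forall j, proj1_sig f (v j) = proj1_sig g (v j).
  move=> j; rewrite (coefP (proj1_sig f (v j))) (coefP (proj1_sig g (v j))).
  apply: eq_bigr => k _; congr (_ *: _).
  by have := f_equal (fun h => h (val j) (val k)) E; rewrite /= !valK.
apply: sig_eq_val; apply: functional_extensionality => m.
have [c ->] := Hv m.
rewrite (lin_sum (proj2_sig f)) (lin_sum (proj2_sig g)).
by apply: eq_bigr => i _; rewrite Ev.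
Qed.
End FG.

Theorem corollary2p7 (C : source_kind) (D : target_kind) :
  only_constant_functors (source_cat C) (target_cat D).
Proof.
have src : forall A : Type, src_good (source_cat C) A.
  by case: C => [|||S] A /=; [exact: src_sets|exact: src_pointed|exact: src_groups|exact: src_modules].
case: D => [|||R] /=.
- exact: (@main _ _ (nat -> nat) (src (nat -> nat)) tgt_finsets).
- exact: main (src _) tgt_fingroups.
- exact: main (src _) tgt_cntgroups.
- pose H1 := src (nat -> nat -> R).
  pose H2 := @tgt_fgmods R.
  pose H3 := main H1 H2.
  exact H3.
Qed.
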